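(* Let $(\mathcal{N},\|\cdot\|)$ be a real normed space with Borel $\sigma$-algebra $\mathcal{B}$ such that the addition is measurable from $(\mathcal{N}^2,\mathcal{B}\otimes\mathcal{B})$ to $(\mathcal{N},\mathcal{B})$, and let $\kappa$ be the density of $\mathcal{N}$. Then there is no probability measure on $(\kappa,\mathfrak{P}(\kappa))$ such that every singleton has measure zero.
   Context: The density of $\mathcal{N}$ is the smallest cardinal $\kappa$ such that $\mathcal{N}$ has a dense subset of cardinality $\kappa$; $\kappa$ is regarded as a set (von Neumann cardinal), and $\mathfrak{P}(E)$ denotes the power set of $E$. *)

(* Defs.v *)
From HB Require Import structures.
From mathcomp Require Import all_boot all_order all_algebra.
From mathcomp Require Import all_classical all_reals all_analysis.
Set Implicit Arguments. Unset Strict Implicit. Unset Printing Implicit Defensive.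
Import Order.TTheory GRing.Theory Num.Theory.
Import numFieldNormedType.Exports.
Local Open Scope classical_set_scope.
Local Open Scope ring_scope.

Definition borel_sets (T : topologicalType) : set (set T) :=
  <<s [set: T], open >>.

Definition borel_prod_sets (T : topologicalType) : set (set (T * T)) :=
  <<s [set: T * T],
      [set Q | exists A B, borel_sets A /\ borel_sets B /\ Q = A `*` B] >>.

Definition add_measurable (R : realType) (N : normedModType R) : Prop :=
  forall C : set N, borel_sets C ->
    borel_prod_sets ((fun p : N * N => p.1 + p.2) @^-1` C).

(* D is a dense subset of minimal cardinality, i.e. its cardinality is the
   density of the space. *)
Definition min_card_dense (T : topologicalType) (D : set T) : Prop :=
  dense D /\ forall D' : set T, dense D' -> (D #<= D')%card.

(* A probability measure on (D, P(D)), D seen as a subset of T: a function on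
   all subsets of D, nonnegative, total mass 1, countably additive. *)
Definition powerset_probability (R : realType) (T : Type) (D : set T)
    (mu : set T -> R) : Prop :=
  [/\ forall A, A `<=` D -> 0 <= mu A,
      mu D = 1 &
      forall F : nat -> set T,
        (forall n, F n `<=` D) -> trivIset setT F ->
        (fun n => \sum_(0 <= k < n) mu (F k)) @ \oo --> mu (\bigcup_n F n)].

(* Main.v *)
Require Import Defs.
From HB Require Import structures.
From mathcomp Require Import all_boot all_order all_algebra.
From mathcomp Require Import all_classical all_reals all_analysis.
From mathcomp Require Import wochoice.
From mathcomp Require Import ring lra.
Set Implicit Arguments. Unset Strict Implicit. Unset Printing Implicit Defensive.
Import Order.TTheory GRing.Theory Num.Theory.
Import numFieldNormedType.Exports.
Local Open Scope classical_set_scope.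
Local Open Scope ring_scope.
Definition DT (T : pointedType) := g_sigma_algebraType (@setT (set T)).

Lemma DT_meas (T : pointedType) (A : set (DT T)) : measurable A.
Proof. exact: sub_sigma_algebra. Qed.

Section fubini_contra.
Local Open Scope ereal_scope.
Variables (R : realType) (T : pointedType) (P : probability (DT T) R).

Lemma fubini_contra (S : set T) (lt : T -> T -> Prop) :
  measurable ([set p | S p.1 /\ S p.2 /\ lt p.2 p.1] : set (DT T * DT T)) ->
  (forall x, S x -> P [set y | S y /\ lt y x] = 0) ->
  (forall y, S y -> P [set x | S x /\ lt y x] = P S) ->
  0 < P S -> False.
Proof.
set E := [set p | _] => mE h1 h2 PS.
have := indic_fubini_tonelli P P mE.
rewrite indic_fubini_tonelli_FE // indic_fubini_tonelli_GE //.
have -> : (P \o xsection E) = cst 0.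
  apply/funext => x /=.
  have [Sx|nSx] := pselect (S x).
    rewrite -(h1 x Sx); congr (P _); apply/seteqP; split => y;
      rewrite /xsection /= inE /E /=; tauto.
  rewrite (_ : xsection E x = set0) ?measure0 //; apply/seteqP; split => y;
    rewrite /xsection /= ?inE /E /=; tauto.
have -> : (P \o ysection E) = ((cst (P S)) \_ S).
  apply/funext => y /=; rewrite patchE.
  have [Sy|nSy] := pselect (S y).
    rewrite mem_set //= -(h2 y Sy); congr (P _); apply/seteqP; split => x;
      rewrite /ysection /= inE /E /=; tauto.
  rewrite memNset // (_ : ysection E y = set0) ?measure0 //; apply/seteqP; split => x;
    rewrite /ysection /= ?inE /E /=; tauto.
rewrite integral0 -integral_mkcond integral_cst; last exact: DT_meas.
move=> /esym/eqP; rewrite mule_eq0 => /orP[] /eqP PS0; by rewrite PS0 ltxx in PS.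
Qed.
End fubini_contra.

Section dmeas.
Variables (R : realType) (T : pointedType) (nu : set T -> R).
Hypothesis nu_ge0 : forall A, 0 <= nu A.
Hypothesis nu_add : forall F : nat -> set T, trivIset setT F ->
  (fun n => \sum_(0 <= k < n) nu (F k)) @ \oo --> nu (\bigcup_n F n).
Hypothesis nuT : nu setT = 1.


Lemma nu0 : nu set0 = 0.
Proof.
have tr : trivIset setT (fun _ : nat => @set0 T) by move=> ? ? _ _ [x [[]]].
have := nu_add tr; rewrite bigcup0 //.
under eq_fun do rewrite sumr_const_nat subn0.
move=> cv.
have nd : nondecreasing_seq (fun n => nu (@set0 T) *+ n).
  by move=> m n mn; exact: ler_wpMn2l.
have := nondecreasing_cvgn_le nd (cvgP _ cv) 2.
rewrite (cvg_lim _ cv) // => h.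
apply/eqP; rewrite eq_le nu_ge0 andbT.
by move: h; rewrite mulr2n; first [rewrite gerDl | rewrite gerDr].
Qed.

Definition dmeas (A : set (DT T)) : \bar R := (nu A)%:E.

Lemma dmeas0 : dmeas set0 = 0%E.
Proof. by rewrite /dmeas nu0. Qed.

Lemma dmeas_ge0 A : (0 <= dmeas A)%E.
Proof. by rewrite lee_fin. Qed.

Lemma dmeas_add : semi_sigma_additive dmeas.
Proof.
move=> F _ tF _; rewrite /dmeas.
under eq_fun do rewrite sumEFin.
by apply: cvg_EFin; [near=> n | exact: nu_add].
Unshelve. all: by end_near.
Qed.

HB.instance Definition _ := isMeasure.Build _ (DT T) R dmeas dmeas0 dmeas_ge0 dmeas_add.
Lemma dmeasT : dmeas setT = 1%E.
Proof. by rewrite /dmeas nuT. Qed.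

HB.instance Definition _ := Measure_isProbability.Build _ (DT T) R dmeas dmeasT.

Let P : probability (DT T) R := dmeas.

Lemma nu_le (A B : set T) : A `<=` B -> nu A <= nu B.
Proof.
move=> AB; have := @le_measure _ _ _ P A B (mem_set (DT_meas _)) (mem_set (DT_meas _)) AB.
by rewrite /P /= /dmeas lee_fin.
Qed.

Lemma nu_U (A B : set T) : A `&` B = set0 -> nu (A `|` B) = nu A + nu B.
Proof.
move=> AB; have := @measureU _ _ _ P A B (DT_meas _) (DT_meas _) AB.
by rewrite /P /= /dmeas -EFinD => -[].
Qed.

Lemma nu_Ule (A B : set T) : nu (A `|` B) <= nu A + nu B.
Proof.
have := @measureU2 _ _ _ P A B (DT_meas _) (DT_meas _).
by rewrite /P /= /dmeas -EFinD lee_fin.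
Qed.

Lemma nu_bigcup0 (F : nat -> set T) : (forall n, nu (F n) = 0) -> nu (\bigcup_n F n) = 0.
Proof.
move=> F0; apply/eqP; rewrite eq_le nu_ge0 andbT.
have := @measure_sigma_subadditive _ _ _ P (\bigcup_n F n) F (fun n => DT_meas _) (DT_meas _) (@subset_refl _ _).
rewrite /P /= /dmeas eseries0 ?lee_fin // => i _ _.
by rewrite F0.
Qed.

Lemma nu_fubini_contra (S : set T) (lt : T -> T -> Prop) :
  measurable ([set p | S p.1 /\ S p.2 /\ lt p.2 p.1] : set (DT T * DT T)) ->
  (forall x, S x -> nu [set y | S y /\ lt y x] = 0) ->
  (forall y, S y -> nu [set x | S x /\ lt y x] = nu S) ->
  0 < nu S -> False.
Proof.
move=> mE h1 h2 PS; apply: (@fubini_contra R T P S lt mE).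
- by move=> x Sx; rewrite /P /= /dmeas h1.
- by move=> y Sy; rewrite /P /= /dmeas h2.
- by rewrite /P /= /dmeas lte_fin.
Qed.

End dmeas.


Section normed.
Variables (R : realType) (N : normedModType R).

Definition sep (e : R) (A : set N) :=
  forall x y, A x -> A y -> x <> y -> e <= `|x - y|.

Lemma maximal_sep e : 0 < e ->
  exists A, sep e A /\ forall x, exists a, A a /\ `|x - a| < e.
Proof.
move=> e0.
have [A [sA Amax]] : exists A, sep e A /\ forall B, A `<` B -> ~ sep e B.
  apply: Zorn_bigcup => F FP Ftot x y [X FX Xx] [Y FY Yy] xy.
  have [XY|YX] := Ftot X Y FX FY.
  - exact: (FP Y FY x y (XY x Xx) Yy xy).
  - exact: (FP X FX x y Xx (YX y Yy) xy).
exists A; split => // x; apply: contrapT => /forallNP hx.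
have far a : A a -> e <= `|x - a|.
  by move=> Aa; have := hx a; rewrite not_andP => -[//|/negP]; rewrite -leNgt.
have nAx : ~ A x by move=> Ax; have := far x Ax; rewrite subrr normr0 leNgt e0.
apply: (Amax (x |` A)).
  split; first by move=> y Ay; right.
  by move=> /(_ x (or_introl erefl)).
move=> y z [->|Ay] [->|Az] yz //.
- exact: far.
- by rewrite distrC; exact: far.
- exact: sA.
Qed.

Lemma dense_sep_union (M : nat -> set N) :
  (forall n x, exists a, M n a /\ `|x - a| < n.+1%:R^-1) -> dense (\bigcup_n M n).
Proof.
move=> hM O [z Oz] oO.
have : nbhs z O by apply: open_nbhs_nbhs; split.
move=> /nbhs_ballP[d /= d0 dO].
have [n _ /(_ n)/(_ (leqnn _)) nd] := near_infty_natSinv_lt (PosNum d0).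
have [a [Ma za]] := hM n z.
exists a; split; last by exists n.
apply: dO; rewrite -ball_normE /=.
exact: lt_trans za nd.
Qed.

Lemma sep_pair (e kk : R) (S : set N) : 0 < e -> 0 <= kk -> sep e S ->
  (forall x, S x -> `|x| < kk) ->
  forall x y s t, S x -> S y -> S s -> S t ->
  `|(s + ((2 * kk + e) / e) *: t) - (x + ((2 * kk + e) / e) *: y)| < e / 2 ->
  x = s /\ y = t.
Proof.
move=> e0 k0 sS bS x y s t Sx Sy Ss St.
set r := (2 * kk + e) / e.
have r0 : 0 <= r by rewrite /r divr_ge0 // ?ltW //; lra.
have re : r * e = 2 * kk + e by rewrite /r divfK // gt_eqF.
have -> : s + r *: t - (x + r *: y) = (s - x) + r *: (t - y).
  by rewrite scalerBr opprD addrACA.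
have [yt|yt] := pselect (y = t).
  subst t; rewrite subrr scaler0 addr0 => h.
  split => //; apply: contrapT => xs.
  have := sS x s Sx Ss xs; rewrite distrC => h'; lra.
move=> h; exfalso.
have h1 := sS y t Sy St yt; rewrite distrC in h1.
have h2 : `|r *: (t - y)| = r * `|t - y| by rewrite normrZ ger0_norm.
have h3 : r * e <= r * `|t - y| by rewrite ler_wpM2l.
have h4 : `|r *: (t - y)| <= `|(s - x) + r *: (t - y)| + `|s - x|.
  by have := ler_normB ((s - x) + r *: (t - y)) (s - x); rewrite addrC addKr.
have h5 : `|s - x| <= `|s| + `|x| by exact: ler_normB.
have := bS s Ss; have := bS x Sx; lra.
Qed.

Lemma borel_prod_pre (r : R) (Q : set (N * N)) : borel_prod_sets Q ->
  measurable ((fun p : N * N => (p.1, r *: p.2)) @^-1` Q : set (DT N * DT N)).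
Proof.
move: Q; apply: smallest_sub.
  split.
  - by rewrite preimage_set0; exact: measurable0.
  - by move=> A mA; rewrite setTD -preimage_setC; exact: measurableC.
  - by move=> A mA; rewrite preimage_bigcup; exact: bigcupT_measurable.
move=> _ [A [B [_ [_ ->]]]].
have -> : (fun p : N * N => (p.1, r *: p.2)) @^-1` (A `*` B) =
    A `*` [set y | B (r *: y)] by apply/seteqP; split => -[x y].
exact: measurableX (DT_meas _) (DT_meas _).
Qed.

End normed.

Section wo.
Variables (R : realType) (T : eqType) (nu : set T -> R).
Hypothesis nu_ge0 : forall A, 0 <= nu A.
Hypothesis nu_le : forall A B, A `<=` B -> nu A <= nu B.

Lemma wo_segment (S : set T) (Rw : rel T) : well_order Rw -> 0 < nu S ->
  exists T0, T0 `<=` S /\ 0 < nu T0 /\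
    forall t, T0 t -> nu [set y | T0 y /\ (Rw y t /\ y <> t)] = 0.
Proof.
move=> wo PS.
have wc : wo_chain Rw predT by move=> A _; exact: wo.
have anti := wo_chain_antisymmetric wc.
pose I s := [set t | S t /\ (Rw t s /\ t <> s)].
have [[s [Ss Is]]|] := pselect (exists s, S s /\ 0 < nu (I s)).
  have [|z [[zin zlb] _]] := wo [pred s | `[< S s /\ 0 < nu (I s) >]].
    by exists s; apply/asboolP.
  move: zin => /asboolP[Sz Iz].
  exists (I z); split; first by move=> t [].
  split => // t [St [Rtz tz]].
  apply/eqP; rewrite eq_le nu_ge0 andbT.
  apply: (le_trans (nu_le (B := I t) _)); first by move=> y [[Sy _] yt].
  rewrite leNgt; apply/negP => It.
  have Rzt : Rw z t by apply: zlb; apply/asboolP.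
  by apply: tz; apply: anti => //; rewrite Rtz Rzt.
move=> /forallNP hI; exists S; split => //; split => // t St.
apply/eqP; rewrite eq_le nu_ge0 andbT.
have := hI t; rewrite not_andP => -[//|/negP]; rewrite -leNgt.
by [].
Qed.
End wo.

Unset Implicit Arguments.

Theorem lemma4p10 (R : realType) (N : normedModType R) :
  add_measurable N ->
  forall D : set N, min_card_dense D ->
  ~ exists mu : set N -> R,
      powerset_probability D mu /\ (forall x, D x -> mu [set x] = 0).
Proof.
move=> hadd D [Ddense Dmin] [mu [[mu_ge0 muD mu_add] mu1]].
have /choice[M hM] : forall n : nat, exists A, sep (n.+1%:R^-1 : R) A /\
    forall x : N, exists a, A a /\ `|x - a| < n.+1%:R^-1.
  by move=> n; apply: maximal_sep; rewrite invr_gt0 ltr0n.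
pose U := \bigcup_n M n.
have Udense : dense U := dense_sep_union (fun n => (hM n).2).
have := Dmin U Udense => /pcard_leP /injfunPex [f fS fI].
pose nu A := mu (D `&` f @^-1` A).
have hge0 A : 0 <= nu A by apply: mu_ge0 => x [].
have hadd' F : trivIset setT F ->
    (fun n => \sum_(0 <= k < n) nu (F k)) @ \oo --> nu (\bigcup_n F n).
  move=> tF; rewrite /nu preimage_bigcup setI_bigcupr.
  apply: mu_add; first by move=> n x [].
  move=> i j _ _ [x [[Dx Fi] [_ Fj]]]; apply: (tF i j I I).
  by exists (f x).
have hT : nu setT = 1 by rewrite /nu preimage_setT setIT.
have nule := nu_le hge0 hadd' hT.
have mu0 : mu set0 = 0.
  by have := nu0 hge0 hadd'; rewrite /nu preimage_set0 setI0.
have nu1 x : nu [set x] = 0.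
  have [[d [Dd fd]]|nd] := pselect (exists d, D d /\ f d = x).
    rewrite /nu (_ : _ `&` _ = [set d]) ?mu1 //; apply/seteqP; split.
      move=> z [Dz /= fz]; apply: fI; rewrite ?inE //=; by rewrite fz fd.
    by move=> z /= ->; split.
  rewrite /nu (_ : _ `&` _ = set0) //; apply/seteqP; split => // z [Dz /= fz].
  by apply: nd; exists z.
have nuUc : nu (~` U) = 0.
  rewrite /nu (_ : _ `&` _ = set0) //; apply/seteqP; split => // z [Dz /= fz].
  by apply: fz; apply: fS.
have [[n [k hk]]|H] := pselect (exists n k,
    0 < nu (M n `&` [set x | `|x| < k%:R])); last first.
  have H0 n k : nu (M n `&` [set x | `|x| < k%:R]) = 0.
    apply/eqP; rewrite eq_le hge0 andbT leNgt; apply/negP => h.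
    by apply: H; exists n, k.
  have Mn0 n : nu (M n) = 0.
    apply/eqP; rewrite eq_le hge0 andbT.
    rewrite -(nu_bigcup0 hge0 hadd' hT (H0 n)).
    apply: nule => x Mx; exists (Num.bound `|x|) => //; split => //.
    exact: archi_boundP.
  have U0 : nu U = 0 by apply: nu_bigcup0 => //.
  have := nu_Ule hge0 hadd' hT U (~` U).
  by rewrite setUv hT U0 nuUc addr0 ler10.
set S := M n `&` _ in hk.
case: (well_ordering_principle N) => Rw wo.
have [T0 [T0S [T0pos T0seg]]] := wo_segment hge0 nule wo hk.
have wc : wo_chain Rw predT by move=> A _; exact: wo.
have tot := wo_chainW wc.
pose e : R := n.+1%:R^-1.
have e0 : 0 < e by rewrite invr_gt0 ltr0n.
pose kk : R := k%:R.
pose r := (2 * kk + e) / e.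
have sepT : sep e T0 by move=> x y /T0S[Mx _] /T0S[My _]; exact: (hM n).1.
have bT x : T0 x -> `|x| < kk by move=> /T0S[].
have sp := sep_pair e0 (ler0n _ k) sepT bT.
apply: (nu_fubini_contra hge0 hadd' hT
  (lt := fun a b => Rw a b /\ a <> b)) T0pos => //; last first.
  move=> y Ty.
  set A := [set x | T0 x /\ (Rw y x /\ y <> x)].
  set B := [set x | T0 x /\ ~ (Rw y x /\ y <> x)].
  have -> : T0 = A `|` B.
    apply/seteqP; split => x; first by move=> Tx; have [h|h] := pselect (Rw y x /\ y <> x); [left|right].
    by move=> [[]|[]].
  rewrite nu_U //; last by apply/seteqP; split => // x [[_ h] [_ h']].
  suff -> : nu B = 0 by rewrite addr0.
  apply/eqP; rewrite eq_le hge0 andbT.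
  apply: le_trans (nule _ _ (_ : B `<=` [set y] `|` [set x | T0 x /\ (Rw x y /\ x <> y)])) _.
    move=> x [Tx h]; have [->|xy] := pselect (x = y); first by left.
    right; split => //; split => //.
    have := tot x y; rewrite !inE => /(_ isT isT) /orP[//|Ryx].
    by exfalso; apply: h; split => // yx; apply: xy.
  by apply: le_trans (nu_Ule hge0 hadd' hT _ _) _; rewrite nu1 T0seg // addr0.
pose Es : set (N * N) := [set q | T0 q.1 /\ T0 q.2 /\ Rw q.2 q.1 /\ q.2 <> q.1].
pose W := \bigcup_(q in Es) ball (q.1 + r *: q.2) (e / 2).
have oW : open W by apply: bigcup_open => q _; exact: ball_open.
have bW : borel_sets W by apply: sub_sigma_algebra.
have := borel_prod_pre r (hadd W bW).
move=> mW.
have -> : [set p | T0 p.1 /\ T0 p.2 /\ Rw p.2 p.1 /\ p.2 <> p.1] =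
    (T0 `*` T0) `&` ((fun p : N * N => (p.1, r *: p.2)) @^-1`
       ((fun p : N * N => p.1 + p.2) @^-1` W)).
  apply/seteqP; split.
    move=> [x y] /= [Tx [Ty h]]; split => //.
    exists (x, y) => //; rewrite -ball_normE /= subrr normr0.
    by rewrite divr_gt0.
  move=> [x y] /= [[Tx Ty] [[s t] [Ts [Tt h]] /=]].
  rewrite -ball_normE /= => hb.
  by have [-> ->] := sp x y s t Tx Ty Ts Tt hb; tauto.
apply: measurableI; last exact: mW.
exact: measurableX (DT_meas _) (DT_meas _).
Qed.
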